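(* Let $p\ge1$, $q\ge 2$, and let $A_1,\dots,A_q\in\mathbb{R}^{p\times p}$ be symmetric matrices such that, with $A_\eta=\sum_{i=1}^q\eta_iA_i$, one has $A_\eta^3=|\eta|^2A_\eta$ for all $\eta\in\mathbb{R}^q$. Then: (i) there are nonnegative integers $\nu,\mu$ with $2\nu+\mu=p$ such that for every $\eta\in\mathbb{R}^q\setminus\{0\}$ and every $i\in\{1,\dots,q\}$, the matrices $\frac{1}{|\eta|}A_\eta$ and $A_i$ have eigenvalues $1$ and $-1$ each of multiplicity $\nu$ and eigenvalue $0$ of multiplicity $\mu$; (ii) $\operatorname{trace}A_i=0$ for all $i$; (iii) $A_i^3=A_i$ for all $i$; (iv) for any $s,t\in\mathbb{R}^q$ with $\langle s,t\rangle=0$, $A_s^2A_t+A_sA_tA_s+A_tA_s^2=|s|^2A_t$.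
   Context: $|\cdot|$ and $\langle\cdot,\cdot\rangle$ denote the standard Euclidean norm and inner product on $\mathbb{R}^q$. *)

(* Defs.v *)
From HB Require Import structures.
From mathcomp Require Import all_boot all_order all_algebra.
From mathcomp Require Import reals.
Set Implicit Arguments. Unset Strict Implicit. Unset Printing Implicit Defensive.
Import Order.TTheory GRing.Theory Num.Theory.
Local Open Scope ring_scope.

Section Defs.
Variable R : realType.

Definition Aeta (p q : nat) (A : 'I_q -> 'M[R]_p) (eta : 'rV[R]_q) : 'M[R]_p :=
  \sum_(i < q) eta 0 i *: A i.

Definition sqnorm (q : nat) (eta : 'rV[R]_q) : R := \sum_(i < q) eta 0 i ^+ 2.

Definition vnorm (q : nat) (eta : 'rV[R]_q) : R := Num.sqrt (sqnorm eta).

Definition dotv (q : nat) (s t : 'rV[R]_q) : R := \sum_(i < q) s 0 i * t 0 i.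

(* The characteristic polynomial of a p x p matrix whose eigenvalues are
   1 and -1 each with multiplicity nu and 0 with multiplicity mu. *)
Definition spec_poly (nu mu : nat) : {poly R} :=
  ('X - 1) ^+ nu * ('X + 1) ^+ nu * 'X ^+ mu.
End Defs.

(* Main.v *)
Require Import Defs.
From HB Require Import structures.
From mathcomp Require Import all_boot all_order all_algebra ssrAC.
From mathcomp Require Import reals ring lra zify.
Import Order.TTheory GRing.Theory Num.Theory.
Local Open Scope ring_scope.
Set Implicit Arguments. Unset Strict Implicit.
Lemma count_struct (F : numFieldType) n (f : 'I_n -> F) :
  (forall i, [\/ f i = 0, f i = 1 | f i = -1]) ->
  exists a b c : nat, [/\ (a + b + c = n)%N,
    \prod_(i < n) ('X - (f i)%:P) = ('X - 1) ^+ a * ('X + 1) ^+ b * 'X ^+ c,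
    \sum_(i < n) f i = a%:R - b%:R &
    \sum_(i < n) f i ^+ 2 = a%:R + b%:R].
Proof.
elim: n f => [|n IH] f Hf.
  by exists 0%N, 0%N, 0%N; rewrite !big_ord0 !expr0 !mulr1 subrr addr0.
have [a [b [c [Habc Hp Hs Hs2]]]] := IH (fun i => f (widen_ord (leqnSn n) i)) (fun i => Hf _).
rewrite !big_ord_recr /= Hp Hs Hs2.
case: (Hf ord_max) => ->.
- exists a, b, c.+1; split.
  + by rewrite addnS Habc.
  + by rewrite polyC0 subr0 exprS; ring.
  + by rewrite addr0.
  + by rewrite expr0n /= addr0.
- exists a.+1, b, c; split.
  + by rewrite -Habc; lia.
  + by rewrite polyC1 (exprS ('X - 1)); ring.
  + by rewrite -natr1; ring.
  + by rewrite -natr1 expr1n; ring.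
- exists a, b.+1, c; split.
  + by rewrite -Habc; lia.
  + by rewrite polyCN polyC1 opprK (exprS ('X + 1)); ring.
  + by rewrite -natr1; ring.
  + by rewrite -natr1 sqrrN expr1n; ring.
Qed.

Lemma char_poly_conj (F : fieldType) n (P D : 'M[F]_n) : P \in unitmx ->
  char_poly (invmx P *m D *m P) = char_poly D.
Proof.
move=> Pu; rewrite /char_poly /char_poly_mx.
set Qi := map_mx (@polyC F) (invmx P); set Q := map_mx (@polyC F) P.
have QiQ : Qi *m Q = 1%:M by rewrite -map_mxM mulVmx // map_mx1.
have -> : 'X%:M - map_mx (@polyC F) (invmx P *m D *m P) =
          Qi *m ('X%:M - map_mx (@polyC F) D) *m Q.
  rewrite !map_mxM -/Qi -/Q mulmxBr mulmxBl scalar_mxC.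
  by rewrite -[('X%:M *m Qi) *m Q]mulmxA QiQ mulmx1.
by rewrite !det_mulmx mulrAC -det_mulmx QiQ det1 mul1r.
Qed.

Lemma cube_root (F : realFieldType) (x : F) : x * (x * x) = x ->
  [\/ x = 0, x = 1 | x = -1].
Proof.
move=> H; have : x * (x - 1) * (x + 1) = 0.
  have e : x * (x - 1) * (x + 1) = x * (x * x) - x by ring.
  by rewrite e H subrr.
move/eqP; rewrite !mulf_eq0 subr_eq0 addr_eq0 => /orP[/orP[]|] /eqP ->;
  by [constructor 1 | constructor 2 | constructor 3].
Qed.

Lemma cube_struct (F : realFieldType) n (B : 'M[F]_n) : B *m B *m B = B ->
  exists a b c : nat, [/\ (a + b + c = n)%N,
    char_poly B = ('X - 1) ^+ a * ('X + 1) ^+ b * 'X ^+ c,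
    \tr B = a%:R - b%:R & \tr (B *m B) = a%:R + b%:R].
Proof.
case: n B => [|n] B HB.
  exists 0%N, 0%N, 0%N; rewrite /char_poly det_mx00 !expr0 !mulr1 /mxtrace !big_ord0.
  by rewrite subrr addr0.
have Hd : diagonalizable B.
  apply/diagonalizableP; exists [:: 1; -1; 0].
    have h1 : (1 : F) != -1 by apply/eqP => h; clear -h; lra.
    have h2 : (1 : F) != 0 by apply/eqP => h; clear -h; lra.
    have h3 : (-1 : F) != 0 by apply/eqP => h; clear -h; lra.
    by rewrite /= !inE negb_or h1 h2 h3.
  apply: mxminpoly_min.
  rewrite !big_cons big_nil !rmorphM /= !rmorphB /= !horner_mx_X !horner_mx_C /= !rmorph1.
  rewrite raddfN raddf0 /= subr0 opprK mulr1 mulrBl mulrDl mul1r mul1r mulrDr.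
  by rewrite mulrA -!mulmxE HB (addrC (B *m B)) subrr.
case: Hd => P Pu /diagonalizable_forPex [D /(simmxP Pu) HPD].
set M := diag_mx D in HPD.
have HBe : B = invmx P *m M *m P. by rewrite -mulmxA -HPD mulmxA mulVmx // mul1mx.
have HMe : M = P *m B *m invmx P by rewrite HPD mulmxK.
have M3 : M *m M *m M = M.
  rewrite HMe !mulmxA !mulmxKV //.
  by rewrite -(mulmxA P B B) -(mulmxA P (B *m B) B) HB.
have HD : forall i, [\/ D 0 i = 0, D 0 i = 1 | D 0 i = -1].
  move=> i; apply: cube_root.
  have := congr1 (fun X : 'M[F]_n.+1 => X i i) M3.
  by rewrite -mulmxA !mul_diag_mx !mxE eqxx mulr1n.
have [a [b [c [Habc Hp Hs Hs2]]]] := @count_struct _ _ (fun i => D 0 i) HD.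
exists a, b, c; split => //.
- rewrite HBe char_poly_conj // char_poly_trig ?diag_mx_is_trig // -Hp.
  by apply: eq_bigr => i _; rewrite mxE eqxx mulr1n.
- have trc : forall X, \tr (invmx P *m X *m P) = \tr X.
    by move=> X; rewrite mxtrace_mulC mulmxA mulmxV // mul1mx.
  by rewrite HBe trc mxtrace_diag.
- have trc : forall X, \tr (invmx P *m X *m P) = \tr X.
    by move=> X; rewrite mxtrace_mulC mulmxA mulmxV // mul1mx.
  have -> : B *m B = invmx P *m (M *m M) *m P.
    by rewrite HBe !mulmxA mulmxK.
  rewrite trc -Hs2 /mxtrace; apply: eq_bigr => i _.
  by rewrite mul_diag_mx !mxE eqxx mulr1n.
Qed.

Lemma irr2n (m k : nat) : (m ^ 2 = 2 * k ^ 2)%N -> m = 0%N.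
Proof.
move=> h; case: (posnP m) => // m0.
have k0 : (0 < k)%N.
  case: (posnP k) => // k0; have : (0 < m ^ 2)%N by rewrite expn_gt0 m0.
  by rewrite h k0.
have := congr1 (logn 2) h.
rewrite lognX lognM ?expn_gt0 ?k0 // lognX (logn_prime 2 (isT : prime 2)) /=.
clear h; move=> hh; exfalso; move: hh; lia.
Qed.

Lemma irr2R (R : realType) (m k : int) :
  (m%:~R : R) ^+ 2 = 2 * (k%:~R) ^+ 2 -> m = 0.
Proof.
move=> h.
have hz : m ^+ 2 = 2 * k ^+ 2.
  apply: (@intr_inj R); rewrite intrM -expr2 h intrM expr2 intrM -expr2; congr (_ * _).
have := congr1 (fun z : int => absz z) hz.
rewrite abszM !abszX /= => hh; have h0 := @irr2n _ `|k|%N hh.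
by apply/eqP; rewrite -absz_eq0 h0.
Qed.

Section Helpers.
Variables (R : realType) (p q : nat) (A : 'I_q -> 'M[R]_p).

Lemma AetaD (s t : 'rV[R]_q) : Aeta A (s + t) = Aeta A s + Aeta A t.
Proof. by rewrite /Aeta -big_split; apply: eq_bigr => i _; rewrite mxE scalerDl. Qed.

Lemma AetaN (t : 'rV[R]_q) : Aeta A (- t) = - Aeta A t.
Proof. by rewrite /Aeta -sumrN; apply: eq_bigr => i _; rewrite mxE scaleNr. Qed.

Lemma AetaB (s t : 'rV[R]_q) : Aeta A (s - t) = Aeta A s - Aeta A t.
Proof. by rewrite AetaD AetaN. Qed.

Lemma AetaZ c (t : 'rV[R]_q) : Aeta A (c *: t) = c *: Aeta A t.
Proof. by rewrite /Aeta scaler_sumr; apply: eq_bigr => i _; rewrite mxE scalerA. Qed.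

Lemma Aeta_e i : Aeta A (delta_mx 0 i) = A i.
Proof.
rewrite /Aeta (bigD1 i) //= mxE !eqxx /= scale1r big1 ?addr0 // => j /negPf hj.
by rewrite mxE hj andbF scale0r.
Qed.

Lemma dotvDl (s1 s2 t : 'rV[R]_q) : dotv (s1 + s2) t = dotv s1 t + dotv s2 t.
Proof. by rewrite /dotv -big_split; apply: eq_bigr => i _; rewrite mxE mulrDl. Qed.

Lemma dotvC (s t : 'rV[R]_q) : dotv s t = dotv t s.
Proof. by apply: eq_bigr => i _; rewrite mulrC. Qed.

Lemma dotvDr (s t1 t2 : 'rV[R]_q) : dotv s (t1 + t2) = dotv s t1 + dotv s t2.
Proof. by rewrite dotvC dotvDl !(dotvC s). Qed.

Lemma dotvNl (s t : 'rV[R]_q) : dotv (- s) t = - dotv s t.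
Proof. by rewrite /dotv -sumrN; apply: eq_bigr => i _; rewrite mxE mulNr. Qed.

Lemma dotvNr (s t : 'rV[R]_q) : dotv s (- t) = - dotv s t.
Proof. by rewrite dotvC dotvNl dotvC. Qed.

Lemma sqnormE (s : 'rV[R]_q) : sqnorm s = dotv s s.
Proof. by apply: eq_bigr => i _; rewrite expr2. Qed.

Lemma dotv_e i j : dotv (delta_mx 0 i : 'rV[R]_q) (delta_mx 0 j) = (i == j)%:R.
Proof.
rewrite /dotv (bigD1 i) //= !mxE !eqxx /= mul1r big1 ?addr0.
  by rewrite eq_sym.
by move=> k /negPf hk; rewrite !mxE hk andbF mul0r.
Qed.

Lemma sqnorm_ge0 (s : 'rV[R]_q) : 0 <= sqnorm s.
Proof. by apply: sumr_ge0 => i _; apply: sqr_ge0. Qed.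

Lemma sqnorm_eq0 (s : 'rV[R]_q) : sqnorm s = 0 -> s = 0.
Proof.
move=> h; apply/matrixP => i j; rewrite mxE ord1.
have := psumr_eq0P (fun k _ => sqr_ge0 (s 0 k)) h (isT : true) (i := j).
by move/eqP; rewrite sqrf_eq0 => /eqP.
Qed.

End Helpers.
Lemma cubeE (Rg : pzRingType) (S T : Rg) :
  (S + T) * (S + T) * (S + T) = S * S * S + (S * S * T + S * T * S + T * S * S)
    + (S * T * T + T * S * T + T * T * S) + T * T * T.
Proof.
rewrite !(mulrDl, mulrDr) !addrA.
by rewrite [LHS](ACl (1*5*2*3*6*7*4*8)).
Qed.
Lemma cubeEN (Rg : pzRingType) (S T : Rg) :
  (S - T) * (S - T) * (S - T) = S * S * S - (S * S * T + S * T * S + T * S * S)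
    + (S * T * T + T * S * T + T * T * S) - T * T * T.
Proof.
rewrite cubeE !(mulrN, mulNr) !opprK -!opprD.
done.
Qed.

Lemma polar (R : realType) (p q : nat) (A : 'I_q -> 'M[R]_p)
  (H3 : forall eta : 'rV[R]_q,
      Aeta A eta *m Aeta A eta *m Aeta A eta = sqnorm eta *: Aeta A eta)
  (s t : 'rV[R]_q) : dotv s t = 0 ->
  Aeta A s *m Aeta A s *m Aeta A t + Aeta A s *m Aeta A t *m Aeta A s
    + Aeta A t *m Aeta A s *m Aeta A s = sqnorm s *: Aeta A t.
Proof.
move=> hst.
have H1 := H3 (s + t); have H2 := H3 (s - t); have Ht := H3 t.
rewrite AetaD in H1; rewrite AetaB in H2.
have n1 : sqnorm (s + t) = sqnorm s + sqnorm t.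
  rewrite !sqnormE dotvDl !dotvDr (dotvC t s) hst; lra.
have n2 : sqnorm (s - t) = sqnorm s + sqnorm t.
  rewrite !sqnormE dotvDl !dotvDr !dotvNl !dotvNr (dotvC t s) hst; lra.
rewrite n1 in H1; rewrite n2 in H2.
move: H1 H2 Ht; rewrite !mulmxE cubeE cubeEN.
set S := Aeta A s; set T := Aeta A t.
move: (S * S * T + S * T * S + T * S * S) => X.
move: (S * T * T + T * S * T + T * T * S) => Y.
move: (S * S * S) (T * T * T) => S3 T3 H1 H2 Ht.
apply/matrixP => i j.
move/matrixP/(_ i j): H1; move/matrixP/(_ i j): H2; move/matrixP/(_ i j): Ht.
rewrite !mxE; lra.
Qed.

Lemma cyc4 (R : realType) (p : nat) (X1 X2 X3 X4 : 'M[R]_p) :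
  \tr (X1 *m X2 *m X3 *m X4) = \tr (X2 *m X3 *m X4 *m X1).
Proof. by rewrite -!mulmxA mxtrace_mulC !mulmxA. Qed.

Lemma Gorth (R : realType) (p q : nat) (A : 'I_q -> 'M[R]_p)
  (H3 : forall eta : 'rV[R]_q,
      Aeta A eta *m Aeta A eta *m Aeta A eta = sqnorm eta *: Aeta A eta)
  (s t : 'rV[R]_q) : dotv s t = 0 ->
  sqnorm s * \tr (Aeta A t *m Aeta A t) = sqnorm t * \tr (Aeta A s *m Aeta A s).
Proof.
move=> hst; have hts : dotv t s = 0 by rewrite dotvC.
have e1 := congr1 (fun M => \tr (M *m Aeta A t)) (polar H3 hst).
have e2 := congr1 (fun M => \tr (M *m Aeta A s)) (polar H3 hts).
move: e1 e2 => /=; set S := Aeta A s; set T := Aeta A t.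
rewrite !mulmxDl !mxtraceD -!scalemxAl !mxtraceZ.
have k1 : \tr (S *m S *m T *m T) = \tr (T *m T *m S *m S) by rewrite cyc4 cyc4.
have k2 : \tr (T *m S *m S *m T) = \tr (T *m T *m S *m S) by rewrite cyc4 cyc4 cyc4.
have k3 : \tr (S *m T *m T *m S) = \tr (T *m T *m S *m S) by rewrite cyc4.
have k4 : \tr (S *m T *m S *m T) = \tr (T *m S *m T *m S) by rewrite cyc4.
rewrite k1 k2 k4 k3; lra.
Qed.

Lemma trN (R : realType) (p : nat) (X : 'M[R]_p) : \tr (- X) = - \tr X.
Proof. by rewrite -scaleN1r mxtraceZ mulN1r. Qed.

Lemma Gdiag (R : realType) (p q : nat) (A : 'I_q -> 'M[R]_p)
  (H3 : forall eta : 'rV[R]_q,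
      Aeta A eta *m Aeta A eta *m Aeta A eta = sqnorm eta *: Aeta A eta)
  i j : \tr (A i *m A i) = \tr (A j *m A j).
Proof.
case: (eqVneq i j) => [-> //|hij].
have h : dotv (delta_mx 0 i : 'rV[R]_q) (delta_mx 0 j) = 0 by rewrite dotv_e (negPf hij).
have := Gorth H3 h.
rewrite !sqnormE !dotv_e !eqxx !Aeta_e !mul1r => h2; by rewrite h2.
Qed.

Lemma Goff (R : realType) (p q : nat) (A : 'I_q -> 'M[R]_p)
  (H3 : forall eta : 'rV[R]_q,
      Aeta A eta *m Aeta A eta *m Aeta A eta = sqnorm eta *: Aeta A eta)
  i j : i != j -> \tr (A i *m A j) = 0.
Proof.
move=> hij.
have hji : (j == i) = false by rewrite eq_sym (negPf hij).
have h : dotv (delta_mx 0 i + delta_mx 0 j : 'rV[R]_q) (delta_mx 0 i - delta_mx 0 j) = 0.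
  rewrite !dotvDl !dotvDr !dotvNr !dotv_e (negPf hij) hji !eqxx /=; lra.
have := Gorth H3 h.
rewrite !sqnormE !dotvDl !dotvDr !dotvNl !dotvNr !dotv_e (negPf hij) hji !eqxx /=.
rewrite AetaB AetaD !Aeta_e.
rewrite !mulmxDl !mulmxDr !mulmxN !mulNmx opprK !mxtraceD !trN (mxtrace_mulC (A j) (A i)).
lra.
Qed.

Lemma Gall (R : realType) (p q : nat) (A : 'I_q -> 'M[R]_p)
  (H3 : forall eta : 'rV[R]_q,
      Aeta A eta *m Aeta A eta *m Aeta A eta = sqnorm eta *: Aeta A eta)
  i0 (eta : 'rV[R]_q) :
  \tr (Aeta A eta *m Aeta A eta) = sqnorm eta * \tr (A i0 *m A i0).
Proof.
rewrite /Aeta mulmx_suml raddf_sum /sqnorm mulr_suml.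
apply: eq_bigr => i _.
rewrite mulmx_sumr raddf_sum (bigD1 i) //= big1 ?addr0.
  by rewrite -scalemxAl -scalemxAr !mxtraceZ (Gdiag H3 i i0); ring.
move=> j hj.
by rewrite -scalemxAl -scalemxAr !mxtraceZ (Goff H3 (i := i) (j := j)) ?mulr0 // eq_sym.
Qed.

Lemma trAeta (R : realType) (p q : nat) (A : 'I_q -> 'M[R]_p) (eta : 'rV[R]_q) :
  \tr (Aeta A eta) = \sum_(i < q) eta 0 i * \tr (A i).
Proof. by rewrite /Aeta raddf_sum; apply: eq_bigr => i _; apply: mxtraceZ. Qed.

Lemma vnorm_sq (R : realType) (q : nat) (eta : 'rV[R]_q) : vnorm eta ^+ 2 = sqnorm eta.
Proof. by rewrite /vnorm sqr_sqrtr // sqnorm_ge0. Qed.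

Lemma Bcube (R : realType) (p q : nat) (A : 'I_q -> 'M[R]_p)
  (H3 : forall eta : 'rV[R]_q,
      Aeta A eta *m Aeta A eta *m Aeta A eta = sqnorm eta *: Aeta A eta)
  (eta : 'rV[R]_q) : sqnorm eta != 0 ->
  let B := (vnorm eta)^-1 *: Aeta A eta in B *m B *m B = B.
Proof.
move=> hs B; rewrite /B -!scalemxAl -!scalemxAr -!scalemxAl !scalerA H3 scalerA.
congr (_ *: _).
have hv0 : vnorm eta != 0.
  by apply/eqP => h; move: hs; rewrite -vnorm_sq h expr0n /= eqxx.
rewrite -vnorm_sq; field; exact: hv0.
Qed.

Lemma trint (R : realType) (p q : nat) (A : 'I_q -> 'M[R]_p)
  (H3 : forall eta : 'rV[R]_q,
      Aeta A eta *m Aeta A eta *m Aeta A eta = sqnorm eta *: Aeta A eta)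
  (eta : 'rV[R]_q) : sqnorm eta != 0 ->
  exists z : int, \tr (Aeta A eta) = vnorm eta * z%:~R.
Proof.
move=> hs.
have [a [b [c [_ _ htr _]]]] := cube_struct (Bcube H3 hs).
exists (a%:Z - b%:Z); rewrite mxtraceZ in htr.
have hv0 : vnorm eta != 0.
  by apply/eqP => h; move: hs; rewrite -vnorm_sq h expr0n /= eqxx.
rewrite intrD intrN -[X in _ = _ * X]/(a%:R - b%:R) -htr; field; exact: hv0.
Qed.

Lemma sq_e (R : realType) (q : nat) (i : 'I_q) : sqnorm (delta_mx 0 i : 'rV[R]_q) = 1.
Proof. by rewrite sqnormE dotv_e eqxx. Qed.

Lemma tr_int_e (R : realType) (p q : nat) (A : 'I_q -> 'M[R]_p)
  (H3 : forall eta : 'rV[R]_q,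
      Aeta A eta *m Aeta A eta *m Aeta A eta = sqnorm eta *: Aeta A eta)
  i : exists z : int, \tr (A i) = z%:~R.
Proof.
have hs : sqnorm (delta_mx 0 i : 'rV[R]_q) != 0 by rewrite sq_e oner_eq0.
have [z hz] := trint H3 hs; exists z.
by rewrite -(Aeta_e A i) hz /vnorm sq_e sqrtr1 mul1r.
Qed.

Lemma tr0 (R : realType) (p q : nat) (A : 'I_q -> 'M[R]_p)
  (H3 : forall eta : 'rV[R]_q,
      Aeta A eta *m Aeta A eta *m Aeta A eta = sqnorm eta *: Aeta A eta)
  (hq : (2 <= q)%N) i : \tr (A i) = 0.
Proof.
have [j hij] : exists j : 'I_q, i != j.
  have h0 : (0 < q)%N by lia.
  have h1 : (1 < q)%N by lia.
  case: (eqVneq i (Ordinal h0)) => [->|h]; last by exists (Ordinal h0).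
  by exists (Ordinal h1); apply/eqP => /(congr1 val).
have hji : (j == i) = false by rewrite eq_sym (negPf hij).
have [zi hzi] := tr_int_e H3 i.
have [zj hzj] := tr_int_e H3 j.
have sp : sqnorm (delta_mx 0 i + delta_mx 0 j : 'rV[R]_q) = 2.
  rewrite sqnormE !dotvDl !dotvDr !dotv_e (negPf hij) hji !eqxx /=; lra.
have sm : sqnorm (delta_mx 0 i - delta_mx 0 j : 'rV[R]_q) = 2.
  rewrite sqnormE !dotvDl !dotvDr !dotvNl !dotvNr !dotv_e (negPf hij) hji !eqxx /=; lra.
have [zp hzp] := trint H3 (eta := delta_mx 0 i + delta_mx 0 j) (ltac:(rewrite sp; lra)).
have [zm hzm] := trint H3 (eta := delta_mx 0 i - delta_mx 0 j) (ltac:(rewrite sm; lra)).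
rewrite AetaD !Aeta_e mxtraceD hzi hzj in hzp.
rewrite AetaB !Aeta_e mxtraceD trN hzi hzj in hzm.
have ep : zi + zj = 0.
  apply: (@irr2R R _ zp); rewrite intrD hzp exprMn vnorm_sq sp //.
have em : zi - zj = 0.
  apply: (@irr2R R _ zm); rewrite intrD intrN hzm exprMn vnorm_sq sm //.
rewrite hzi; have -> : zi = 0 by lia.
by [].
Qed.

Lemma spec_of (R : realType) (p : nat) (B : 'M[R]_p) (a0 c0 : nat) :
  (2 * a0 + c0 = p)%N ->
  B *m B *m B = B -> \tr B = 0 -> \tr (B *m B) = a0%:R + a0%:R ->
  char_poly B = spec_poly R a0 c0.
Proof.
move=> hp hB ht ht2.
have [a [b [c [habc hcp htr htr2]]]] := cube_struct hB.
have hab : a = b.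
  apply/eqP; rewrite -(eqr_nat R) -subr_eq0; apply/eqP; by rewrite -htr.
have hab2 : (a + b = a0 + a0)%N.
  apply/eqP; rewrite -(eqr_nat R) !natrD; apply/eqP; by rewrite -htr2.
have ha : a = a0 by lia.
have hc : c = c0 by lia.
by rewrite hcp /spec_poly -hab ha hc.
Qed.

Unset Implicit Arguments.

Theorem lemma3p1 (R : realType) (p q : nat) (A : 'I_q -> 'M[R]_p) :
  (1 <= p)%N -> (2 <= q)%N ->
  (forall i, (A i)^T = A i) ->
  (forall eta : 'rV[R]_q,
      Aeta A eta *m Aeta A eta *m Aeta A eta = sqnorm eta *: Aeta A eta) ->
  [/\ (exists nu mu : nat, (2 * nu + mu = p)%N /\
         (forall eta : 'rV[R]_q, eta != 0 ->
            char_poly ((vnorm eta)^-1 *: Aeta A eta) = spec_poly R nu mu) /\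
         (forall i, char_poly (A i) = spec_poly R nu mu)),
      (forall i, \tr (A i) = 0),
      (forall i, A i *m A i *m A i = A i) &
      (forall s t : 'rV[R]_q, dotv s t = 0 ->
         Aeta A s *m Aeta A s *m Aeta A t + Aeta A s *m Aeta A t *m Aeta A s
         + Aeta A t *m Aeta A s *m Aeta A s = sqnorm s *: Aeta A t)].
Proof.
move=> hp hq _ H3.
have h0 : (0 < q)%N by lia.
pose i0 := Ordinal h0.
have Hiii : forall i, A i *m A i *m A i = A i.
  by move=> i; have := H3 (delta_mx 0 i); rewrite !Aeta_e sq_e scale1r.
have Htr := tr0 H3 hq.
have [a0 [b0 [c0 [habc0 hcp0 htr0 htr20]]]] := cube_struct (Hiii i0).
have hab : a0 = b0.
  apply/eqP; rewrite -(eqr_nat R) -subr_eq0; apply/eqP; by rewrite -htr0 Htr.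
have hp' : (2 * a0 + c0 = p)%N by lia.
rewrite -hab in htr20.
split => //.
- exists a0, c0; split => //; split.
  + move=> eta hne.
    have hs : sqnorm eta != 0.
      by apply/eqP => /sqnorm_eq0 h; move: hne; rewrite h eqxx.
    apply: spec_of hp' (Bcube H3 hs) _ _.
      by rewrite mxtraceZ trAeta big1 ?mulr0 // => i _; rewrite Htr mulr0.
    rewrite -scalemxAl -scalemxAr !mxtraceZ (Gall H3 i0) htr20 mulrA -expr2.
    rewrite exprVn vnorm_sq mulrA mulVf ?mul1r //.
  + move=> i; apply: spec_of hp' (Hiii i) (Htr i) _.
    by rewrite (Gdiag H3 i i0).
- by move=> s t hst; exact: (@polar R p q A H3 s t hst).
Qed.
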